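(* Let $(A,\circ_A,\vdash_A,\dashv_A)$ be a Gel'fand–Dorfman dialgebra and $P:A\to A$ a linear map which is a derivation of each of the three multiplications $\circ_A,\vdash_A,\dashv_A$. Define $x\cdot_A y=x\circ_A y+P(x)\vdash_A y-P(y)\dashv_A x$ for all $x,y\in A$. Then $(A,\cdot_A)$ is a Leibniz algebra.
   Context: All vector spaces are over a field $\mathbb K$ of characteristic zero. A Leibniz algebra is a vector space with multiplication $\circ$ satisfying $x\circ(y\circ z)=(x\circ y)\circ z+y\circ(x\circ z)$. A linear map $P$ is a derivation of a multiplication $\ast$ if $P(x\ast y)=P(x)\ast y+x\ast P(y)$. A Novikov dialgebra is $(A,\vdash_A,\dashv_A)$ satisfying for all $x,y,z$: (ND1) $x\vdash_A(y\vdash_A z)=(x\vdash_A y)\vdash_A z-(y\dashv_A x)\vdash_A z+y\vdash_A(x\vdash_A z)$; (ND2) $(y\vdash_A z)\dashv_A x=y\vdash_A(z\dashv_A x)-z\dashv_A(y\vdash_A x)+(z\dashv_A y)\dashv_A x$; (ND3) $z\dashv_A(x\vdash_A y)=z\dashv_A(x\dashv_A y)$; (ND4) $(z\dashv_A y)\dashv_A x=(z\dashv_A x)\dashv_A y$; (ND5) $(y\dashv_A x)\vdash_A z=(y\vdash_A z)\dashv_A x=(y\vdash_A x)\vdash_A z$. A Gel'fand–Dorfman dialgebra is $(A,\circ_A,\vdash_A,\dashv_A)$ such that $(A,\circ_A)$ is a Leibniz algebra, $(A,\vdash_A,\dashv_A)$ is a Novikov dialgebra, and for all $x,y,z$: (GD1)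 $x\vdash_A(y\circ_A z)-(x\vdash_A y)\circ_A z-(x\circ_A y)\vdash_A z-y\circ_A(x\vdash_A z)+(x\circ_A z)\dashv_A y=0$; (GD2) $x\circ_A(y\vdash_A z)-(y\circ_A z)\dashv_A x+(y\dashv_A x)\circ_A z-(x\circ_A y)\vdash_A z-y\vdash_A(x\circ_A z)=0$; (GD3) $x\circ_A(z\dashv_A y)+(y\circ_A z)\dashv_A x-z\dashv_A(x\circ_A y)-y\circ_A(z\dashv_A x)-(x\circ_A z)\dashv_A y=0$. *)

(* Defs.v *)
From mathcomp Require Import all_boot all_order all_algebra.
Set Implicit Arguments. Unset Strict Implicit. Unset Printing Implicit Defensive.
Import GRing.Theory.
Local Open Scope ring_scope.

Section Defs.
Variables (K : fieldType) (A : lmodType K).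

Definition bilinear_mul (m : A -> A -> A) : Prop :=
  (forall a x y z, m (a *: x + y) z = a *: m x z + m y z) /\
  (forall a x y z, m x (a *: y + z) = a *: m x y + m x z).

Definition leibniz (m : A -> A -> A) : Prop :=
  forall x y z, m x (m y z) = m (m x y) z + m y (m x z).

Definition leibniz_algebra (m : A -> A -> A) : Prop :=
  bilinear_mul m /\ leibniz m.

Definition is_derivation (P : A -> A) (m : A -> A -> A) : Prop :=
  forall x y, P (m x y) = m (P x) y + m x (P y).

Definition novikov_dialgebra (l r : A -> A -> A) : Prop :=
  bilinear_mul l /\ bilinear_mul r /\
  (forall x y z, l x (l y z) = l (l x y) z - l (r y x) z + l y (l x z)) /\
  (forall x y z, r (l y z) x = l y (r z x) - r z (l y x) + r (r z y) x) /\
  (forall x y z, r z (l x y) = r z (r x y)) /\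
  (forall x y z, r (r z y) x = r (r z x) y) /\
  (forall x y z, l (r y x) z = r (l y z) x /\ r (l y z) x = l (l y x) z).

(* (A, c, l, r) with c = \circ, l = \vdash, r = \dashv *)
Definition GD_dialgebra (c l r : A -> A -> A) : Prop :=
  leibniz_algebra c /\ novikov_dialgebra l r /\
  (forall x y z, l x (c y z) - c (l x y) z - l (c x y) z - c y (l x z)
                 + r (c x z) y = 0) /\
  (forall x y z, c x (l y z) - r (c y z) x + c (r y x) z - l (c x y) z
                 - l y (c x z) = 0) /\
  (forall x y z, c x (r z y) + r (c y z) x - r z (c x y) - c y (r z x)
                 - r (c x z) y = 0).

Definition dot_mul (c l r : A -> A -> A) (P : A -> A) : A -> A -> A :=
  fun x y => c x y + l (P x) y - r (P y) x.

End Defs.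

(* Main.v *)
Require Import Defs.
From mathcomp Require Import all_boot all_order all_algebra.
Set Implicit Arguments. Unset Strict Implicit. Unset Printing Implicit Defensive.
Import GRing.Theory.
Local Open Scope ring_scope.

Inductive zexpr := ZAtom of nat | ZAdd of zexpr & zexpr | ZOpp of zexpr | ZZero.

Fixpoint zeval (V : zmodType) (env : seq V) (e : zexpr) : V :=
  match e with
  | ZAtom n => nth 0 env n
  | ZAdd a b => zeval env a + zeval env b
  | ZOpp a => - zeval env a
  | ZZero => 0
  end.

Fixpoint addl (a b : seq int) : seq int :=
  match a, b with
  | [::], _ => b
  | _, [::] => a
  | x :: a', y :: b' => (x + y) :: addl a' b'
  end.

Fixpoint coef (e : zexpr) : seq int :=
  match e with
  | ZAtom n => rcons (nseq n 0) 1
  | ZAdd a b => addl (coef a) (coef b)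
  | ZOpp a => map (fun k => - k) (coef a)
  | ZZero => [::]
  end.

Fixpoint evc (V : zmodType) (env : seq V) (s : seq int) : V :=
  match s with
  | [::] => 0
  | k :: s' => (nth 0 env 0) *~ k + evc (behead env) s'
  end.

Lemma evc_addl (V : zmodType) (a b : seq int) (env : seq V) :
  evc env (addl a b) = evc env a + evc env b.
Proof.
elim: a b env => [|x a IH] [|y b] env /=; rewrite ?add0r ?addr0 //.
by rewrite IH mulrzDr addrACA.
Qed.

Lemma evc_opp (V : zmodType) (a : seq int) (env : seq V) :
  evc env (map (fun k => - k) a) = - evc env a.
Proof.
elim: a env => [|x a IH] env /=; first by rewrite oppr0.
by rewrite IH mulrNz opprD.
Qed.

Lemma evc_atom (V : zmodType) n (env : seq V) :
  evc env (rcons (nseq n 0) 1) = nth 0 env n.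
Proof.
elim: n env => [|n IH] env /=; first by rewrite addr0.
by rewrite mulr0z add0r IH nth_behead.
Qed.

Lemma zeval_evc (V : zmodType) (env : seq V) e : zeval env e = evc env (coef e).
Proof.
elim: e => [n|a IHa b IHb|a IHa|] /=.
- by rewrite evc_atom.
- by rewrite evc_addl IHa IHb.
- by rewrite evc_opp IHa.
- by [].
Qed.

Lemma evc_zero (V : zmodType) (env : seq V) s :
  all (fun k => k == 0) s -> evc env s = 0.
Proof.
elim: s env => [|k s IH] env //= /andP[/eqP -> /IH ->].
by rewrite mulr0z addr0.
Qed.

Lemma zsound (V : zmodType) (env : seq V) e1 e2 :
  all (fun k => k == 0) (coef (ZAdd e1 (ZOpp e2))) ->
  zeval env e1 = zeval env e2.
Proof.
move=> H; apply/eqP; rewrite -subr_eq0; apply/eqP.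
have := evc_zero env H; by rewrite -zeval_evc.
Qed.

Ltac zmem x l :=
  lazymatch l with
  | nil => constr:(false)
  | (x :: _) => constr:(true)
  | (_ :: ?r) => zmem x r
  end.

Ltac zcollect t env :=
  lazymatch t with
  | (?a + ?b)%R => let env := zcollect a env in zcollect b env
  | (- ?a)%R => zcollect a env
  | 0%R => env
  | _ => let b := zmem t env in
         lazymatch b with true => env | false => constr:(t :: env) end
  end.

Ltac zidx x l :=
  lazymatch l with
  | (x :: _) => constr:(0%N)
  | (_ :: ?r) => let n := zidx x r in constr:(S n)
  end.

Ltac zreify t env :=
  lazymatch t with
  | (?a + ?b)%R => let ea := zreify a env in let eb := zreify b env in
                  constr:(ZAdd ea eb)
  | (- ?a)%R => let ea := zreify a env in constr:(ZOpp ea)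
  | 0%R => constr:(ZZero)
  | _ => let n := zidx t env in constr:(ZAtom n)
  end.

Ltac zmod_eq :=
  lazymatch goal with
  | |- @eq ?T ?a ?b =>
    let env := zcollect a (@nil T) in
    let env := zcollect b env in
    let ea := zreify a env in
    let eb := zreify b env in
    apply (@zsound _ env ea eb); vm_compute; reflexivity
  end.

Section Bil.
Variables (K : fieldType) (A : lmodType K) (m : A -> A -> A).
Hypothesis Hm : bilinear_mul m.

Lemma bmDl x y z : m (x + y) z = m x z + m y z.
Proof. by rewrite -[x]scale1r (proj1 Hm) !scale1r. Qed.
Lemma bmDr x y z : m x (y + z) = m x y + m x z.
Proof. by rewrite -[y]scale1r (proj2 Hm) !scale1r. Qed.
Lemma bm0l z : m 0 z = 0.
Proof. by apply: (addrI (m 0 z)); rewrite -bmDl !addr0. Qed.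
Lemma bm0r z : m z 0 = 0.
Proof. by apply: (addrI (m z 0)); rewrite -bmDr !addr0. Qed.
Lemma bmNl x z : m (- x) z = - m x z.
Proof. by apply/eqP; rewrite -addr_eq0 -bmDl addNr bm0l. Qed.
Lemma bmNr x z : m z (- x) = - m z x.
Proof. by apply/eqP; rewrite -addr_eq0 -bmDr addNr bm0r. Qed.
End Bil.

Theorem proposition3p12 (K : fieldType) (A : lmodType K)
  (c l r : A -> A -> A) (P : {linear A -> A}) :
  [pchar K] =i pred0 ->
  GD_dialgebra c l r ->
  is_derivation P c -> is_derivation P l -> is_derivation P r ->
  leibniz_algebra (dot_mul c l r P).
Proof.
move=> _ [[Hc cL] [[Hl [Hr [N1 [N2 [N3 [N4 N5]]]]]] [G1 [G2 G3]]]] dc dl dr.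
split.
  split=> a x y z; rewrite /dot_mul.
  - rewrite linearP (proj1 Hc) (proj1 Hl) (proj2 Hr) !scalerDr !scalerN.
    zmod_eq.
  - rewrite linearP (proj2 Hc) (proj2 Hl) (proj1 Hr) !scalerDr !scalerN.
    zmod_eq.
move=> x y z; rewrite /dot_mul.
rewrite /is_derivation in dc dl dr.
have PD : forall a b, P (a + b) = P a + P b by move=> a b; exact: raddfD.
have PN : forall a, P (- a) = - P a by move=> a; exact: raddfN.
rewrite ?(PD, PN, dc, dl, dr,
          bmDl Hc, bmDr Hc, bmNl Hc, bmNr Hc,
          bmDl Hl, bmDr Hl, bmNl Hl, bmNr Hl,
          bmDl Hr, bmDr Hr, bmNl Hr, bmNr Hr).
have e1 := cL x y z.
have e2 := esym (G3 x y (P z)).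
have e3 := N4 x y (P (P z)).
have e4 := G2 x (P y) z.
have e5 := esym (N2 x (P y) (P z)).
have e6 := proj1 (N5 x (P (P y)) z).
have e7 := G1 (P x) y z.
have e8 := N1 (P x) (P y) z.
have e9 := N1 (P (P x)) y z.
have e10 := esym (proj1 (N5 (P (P x)) y z)).
have e11 := esym (proj2 (N5 (P (P x)) y z)).
have e12 := N2 y (P x) (P z).
have e13 := N1 y (P (P x)) z.
have e14 := esym (proj1 (N5 y (P (P x)) z)).
have e15 := N3 (P y) x (P z).
have H := f_equal2 +%R e1 (f_equal2 +%R e2 (f_equal2 +%R e3 (f_equal2 +%R e4
  (f_equal2 +%R e5 (f_equal2 +%R e6 (f_equal2 +%R e7 (f_equal2 +%R e8
  (f_equal2 +%R e9 (f_equal2 +%R e10 (f_equal2 +%R e11 (f_equal2 +%R e12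
  (f_equal2 +%R e13 (f_equal2 +%R e14 e15))))))))))))).
apply/eqP; rewrite -subr_eq0; apply/eqP.
lazymatch type of H with ?SA = ?SB =>
  transitivity (SA - SB); last by rewrite H subrr end.
zmod_eq.
Qed.
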